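(* Let $X$ be a set strongly star Hurewicz space. Then the following are equivalent: (1) $X$ is meta-Lindel\''of; (2) $X$ is para-Lindel\''of; (3) $X$ is Lindel\''of.
   Context: For a subset $A$ of a space $X$ and a collection $\mathcal{U}$ of subsets of $X$, ${\rm St}(A,\mathcal{U}) = \bigcup\{U \in \mathcal{U}: U \cap A \neq \emptyset\}$. A space is meta-Lindel\''of if each open cover has a point-countable open refinement, and para-Lindel\''of if each open cover has a locally countable open refinement. $X$ is set strongly star Hurewicz if for each nonempty $A \subset X$ and each sequence $(\mathcal{U}_n: n\in\mathbb{N})$ of collections of sets open in $X$ with $\overline{A} \subset \bigcup\mathcal{U}_n$ for all $n$, there are finite sets $F_n \subset \overline{A}$ such that each $x \in A$ lies in ${\rm St}(F_n,\mathcal{U}_n)$ for all but finitely many $n$. *)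

(* Defs.v *)
From HB Require Import structures.
From mathcomp Require Import all_boot all_order all_algebra.
From mathcomp Require Import all_classical all_reals all_analysis.
Set Implicit Arguments. Unset Strict Implicit. Unset Printing Implicit Defensive.
Local Open Scope classical_set_scope.

Definition star {T : Type} (A : set T) (U : set (set T)) : set T :=
  [set x | exists V, U V /\ V `&` A !=set0 /\ V x].

Definition open_cover {T : topologicalType} (U : set (set T)) : Prop :=
  (forall V, U V -> open V) /\ (forall x : T, exists V, U V /\ V x).

Definition open_refinement {T : topologicalType} (V U : set (set T)) : Prop :=
  open_cover V /\ (forall W, V W -> exists W', U W' /\ W `<=` W').

Definition point_countable {T : Type} (V : set (set T)) : Prop :=
  forall x : T, countable [set W | V W /\ W x].

Definition locally_countable {T : topologicalType} (V : set (set T)) : Prop :=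
  forall x : T, exists N, nbhs x N /\ countable [set W | V W /\ W `&` N !=set0].

Definition Lindelof (T : topologicalType) : Prop :=
  forall U : set (set T), open_cover U ->
    exists U', U' `<=` U /\ countable U' /\ (forall x : T, exists V, U' V /\ V x).

Definition meta_Lindelof (T : topologicalType) : Prop :=
  forall U : set (set T), open_cover U ->
    exists V, open_refinement V U /\ point_countable V.

Definition para_Lindelof (T : topologicalType) : Prop :=
  forall U : set (set T), open_cover U ->
    exists V, open_refinement V U /\ locally_countable V.

Definition set_strongly_star_Hurewicz (T : topologicalType) : Prop :=
  forall (A : set T), A !=set0 ->
  forall (U : nat -> set (set T)),
    (forall n V, U n V -> open V) ->
    (forall n, closure A `<=` \bigcup_(V in U n) V) ->
    exists F : nat -> set T,
      (forall n, finite_set (F n) /\ F n `<=` closure A) /\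
      (forall x, A x -> exists N, forall n, (N <= n)%N -> star (F n) (U n) x).

(* Main.v *)
Require Import Defs.
From mathcomp Require Import all_boot all_order all_algebra.
From mathcomp Require Import all_classical all_reals all_analysis.
Local Open Scope classical_set_scope.

Lemma lind_para (T : topologicalType) : Lindelof T -> para_Lindelof T.
Proof.
move=> HL U [Uo Uc].
have [U' [sU [cU cov]]] := HL U (conj Uo Uc).
exists U'; split; first split.
- split => // V /sU; exact: Uo.
- by move=> W UW; exists W; split => //; exact: sU.
- move=> x; exists setT; split; first exact: filterT.
  by apply: sub_countable cU; apply: subset_card_le => W [].
Qed.

Lemma para_meta (T : topologicalType) : para_Lindelof T -> meta_Lindelof T.
Proof.
move=> HP U cU; have [V [rV lV]] := HP U cU; exists V; split => // x.
have [N [Nx cN]] := lV x.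
apply: sub_countable cN; apply: subset_card_le => W [VW Wx]; split => //.
by exists x; split => //; exact: nbhs_singleton.
Qed.

Lemma meta_lind (T : topologicalType) : set_strongly_star_Hurewicz T ->
  meta_Lindelof T -> Lindelof T.
Proof.
move=> HS HM U cU.
have [V [[[Vo Vc] Vr] pV]] := HM U cU.
have [g Hg] : exists g : set T -> set T, forall W, V W -> U (g W) /\ W `<=` g W.
  have : forall W, exists W', V W -> U W' /\ W `<=` W'.
    move=> W; have [VW|nVW] := pselect (V W).
      by have [W' ?] := Vr W VW; exists W'.
    by exists W.
  by move=> /boolp.choice [f Hf]; exists f.
have [[x0 _]|nT] := pselect (exists x : T, True); last first.
  exists set0; split => //; split; first exact: countable0.
  by move=> x; exfalso; apply: nT; exists x.
have covV : forall n : nat, closure [set: T] `<=` \bigcup_(W in V) W.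
  by move=> n x _; have [W [VW Wx]] := Vc x; exists W.
have [F [HF Hcov]] := HS setT (ex_intro _ x0 I) (fun _ => V) (fun _ => Vo) covV.
pose C := \bigcup_(n in setT) \bigcup_(y in F n) [set W | V W /\ W y].
have cC : countable C.
  apply: bigcup_countable; first exact: countableP.
  move=> n _; apply: bigcup_countable.
    exact: finite_set_countable (HF n).1.
  by move=> y _; exact: pV.
exists (g @` C); split; last split.
- by move=> _ [W [n _ [y _ [VW _]]] <-]; exact: (Hg W VW).1.
- exact: sub_countable (card_image_le _ _) cC.
- move=> x; have [N HN] := Hcov x I.
  have [W [VW [[y [Wy Fy]] Wx]]] := HN N (leqnn N).
  exists (g W); split; last exact: (Hg W VW).2.
  by exists W => //; exists N => //; exists y.
Qed.

Theorem mainTheorem4 (T : topologicalType) :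
  set_strongly_star_Hurewicz T ->
  (meta_Lindelof T <-> para_Lindelof T) /\ (para_Lindelof T <-> Lindelof T).
Proof.
move=> HS.
have ML := @meta_lind T HS.
have LP := @lind_para T.
have PM := @para_meta T.
split; split => H.
- exact: LP (ML H).
- exact: PM H.
- exact: ML (PM H).
- exact: LP H.
Qed.
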